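(* Let $a,c>0$ and $b,d<0$ be real numbers with $x_A<x_B$, and let $W_0(z)=1$, $W_1(z)=z$, $W_n(z)=(az+b)W_{n-1}(z)+(cz+d)W_{n-2}(z)$ for $n\ge2$. Then $u,v$ are real and $$u\le x_\Delta^-<x_A<x_\Delta^+\le v<x_B,\qquad u<0<v,$$ and for every $n\ge0$, $(-1)^nW_n(u)>0$ and $W_n(v)>0$. Moreover, both $u$ and $v$ are limits of zeros of $\{W_n(z)\}$.
   Context: Notation: $A(z)=az+b$, $B(z)=cz+d$, $x_A=-b/a$, $x_B=-d/c$, $\Delta_\Delta=c^2-a^2B(x_A)$ (positive here), $x_\Delta^\pm=x_A+\frac{-2c\pm2\sqrt{\Delta_\Delta}}{a^2}$, $g(z)=(1-a)z^2-(b+c)z-d$, $\Delta_g=(b+c)^2+4d(1-a)$, $F=\Delta_g-\Delta_\Delta=d(a-2)^2+bc(2-a)+b^2$. The zeros of $g$ are $x_g^\pm=\frac{b+c}{2(1-a)}\pm\frac{\sqrt{\Delta_g}}{2|1-a|}$ if $a\neq1$, and $x_g^\pm=-d/(b+c)$ if $a=1$ and $b+c\ne0$. Define $(u,v)=(x_\Delta^-,x_\Delta^+)$ if $a<2$ and $F\le0$; $(u,v)=(x_g^-,x_g^+)$ if $a>2$ and $F<0$; $(u,v)=(x_g^+,x_\Delta^+)$ if $a<1$ and $F>0$; and $(u,v)=(x_g^-,x_\Delta^+)$ in all other cases. A number $z^*$ is a limit of zeros of $\{W_n\}$ if there exist zeros $z_n$ of $W_n$ with $z_n\to z^*$. *)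

(* Defs.v *)
From Stdlib Require Import Reals.
Open Scope R_scope.

Fixpoint Wr (a b c d : R) (n : nat) (x : R) : R :=
  match n with
  | O => 1
  | S m => match m with
           | O => x
           | S k => (a * x + b) * Wr a b c d m x + (c * x + d) * Wr a b c d k x
           end
  end.

Definition Cx : Type := (R * R)%type.
Definition Cadd (z w : Cx) : Cx := (fst z + fst w, snd z + snd w).
Definition Cmul (z w : Cx) : Cx :=
  (fst z * fst w - snd z * snd w, fst z * snd w + snd z * fst w).
Definition Cof (r : R) : Cx := (r, 0).

Fixpoint Wc (a b c d : R) (n : nat) (z : Cx) : Cx :=
  match n with
  | O => Cof 1
  | S m => match m with
           | O => z
           | S k => Cadd (Cmul (Cadd (Cmul (Cof a) z) (Cof b)) (Wc a b c d m z))
                         (Cmul (Cadd (Cmul (Cof c) z) (Cof d)) (Wc a b c d k z))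
           end
  end.

Definition limit_of_zeros (a b c d : R) (zs : R) : Prop :=
  exists (N : nat) (z : nat -> Cx),
    (forall n, (N <= n)%nat -> Wc a b c d n (z n) = Cof 0) /\
    (forall eps, eps > 0 -> exists M, forall n, (M <= n)%nat ->
        Rsqr (fst (z n) - zs) + Rsqr (snd (z n)) < eps).

Definition xA (a b : R) : R := - b / a.
Definition xB (c d : R) : R := - d / c.
Definition DeltaD (a b c d : R) : R := c ^ 2 - a ^ 2 * (c * xA a b + d).
Definition xDm (a b c d : R) : R := xA a b + (- 2 * c - 2 * sqrt (DeltaD a b c d)) / a ^ 2.
Definition xDp (a b c d : R) : R := xA a b + (- 2 * c + 2 * sqrt (DeltaD a b c d)) / a ^ 2.
Definition Deltag (a b c d : R) : R := (b + c) ^ 2 + 4 * d * (1 - a).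
Definition Ff (a b c d : R) : R := d * (a - 2) ^ 2 + b * c * (2 - a) + b ^ 2.

Definition xgm (a b c d : R) : R :=
  if Req_EM_T a 1 then - d / (b + c)
  else (b + c) / (2 * (1 - a)) - sqrt (Deltag a b c d) / (2 * Rabs (1 - a)).
Definition xgp (a b c d : R) : R :=
  if Req_EM_T a 1 then - d / (b + c)
  else (b + c) / (2 * (1 - a)) + sqrt (Deltag a b c d) / (2 * Rabs (1 - a)).

Definition case1 (a b c d : R) : Prop := a < 2 /\ Ff a b c d <= 0.
Definition case2 (a b c d : R) : Prop := a > 2 /\ Ff a b c d < 0.
Definition case3 (a b c d : R) : Prop := a < 1 /\ Ff a b c d > 0.

Definition uv (a b c d : R) : R * R :=
  if Rlt_dec a 2 then
    if Rle_dec (Ff a b c d) 0 then (xDm a b c d, xDp a b c d)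
    else if Rlt_dec a 1 then (xgp a b c d, xDp a b c d)
    else (xgm a b c d, xDp a b c d)
  else if Rlt_dec 2 a then
    if Rlt_dec (Ff a b c d) 0 then (xgm a b c d, xgp a b c d)
    else (xgm a b c d, xDp a b c d)
  else (xgm a b c d, xDp a b c d).

Definition u (a b c d : R) : R := fst (uv a b c d).
Definition v (a b c d : R) : R := snd (uv a b c d).

(* "u, v are real": whenever the zeros x_g^± of g are used (every case except
   case1), they are genuine real numbers: Delta_g >= 0 if a <> 1, and b + c <> 0
   if a = 1.  (Delta_Delta >= 0 is also asserted.) *)
Definition uv_real (a b c d : R) : Prop :=
  0 <= DeltaD a b c d /\
  (~ case1 a b c d -> (a <> 1 -> 0 <= Deltag a b c d) /\ (a = 1 -> b + c <> 0)).

(* Main.v *)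
Require Import Defs.
From Stdlib Require Import Reals Lra Lia Psatz ClassicalEpsilon.
Open Scope R_scope.

Lemma Wr_SS a b c d k x : Wr a b c d (S (S k)) x =
  (a*x+b) * Wr a b c d (S k) x + (c*x+d) * Wr a b c d k x.
Proof. reflexivity. Qed.

Lemma two_step (P : nat -> Prop) : P 0%nat -> P 1%nat ->
  (forall k, P k -> P (S k) -> P (S (S k))) -> forall n, P n.
Proof.
  intros H0 H1 HS n. assert (P n /\ P (S n)); [|tauto].
  induction n; [tauto|]. destruct IHn; split; auto.
Qed.

Lemma cont_lin a b : continuity (fun x => a*x+b).
Proof. apply derivable_continuous. reg. Qed.

Lemma Wr_cont a b c d n : continuity (Wr a b c d n).
Proof.
  revert n; apply two_step.
  - apply continuity_const; intros x y; reflexivity.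
  - change (continuity (fun x => x)). apply derivable_continuous, derivable_id.
  - intros k H0 H1.
    change (continuity (fun x => (a*x+b) * Wr a b c d (S k) x + (c*x+d) * Wr a b c d k x)).
    apply (continuity_plus (fun x => (a*x+b) * Wr a b c d (S k) x) (fun x => (c*x+d) * Wr a b c d k x));
    apply (continuity_mult (fun x => _ * x + _)); auto; apply cont_lin.
Qed.

Lemma Wc_real a b c d n x : Wc a b c d n (x, 0) = (Wr a b c d n x, 0).
Proof.
  revert n; apply two_step.
  - reflexivity.
  - reflexivity.
  - intros k H0 H1. change (Wc a b c d (S (S k)) (x,0)) with
      (Cadd (Cmul (Cadd (Cmul (Cof a) (x,0)) (Cof b)) (Wc a b c d (S k) (x,0)))
            (Cmul (Cadd (Cmul (Cof c) (x,0)) (Cof d)) (Wc a b c d k (x,0)))).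
    rewrite H0, H1, Wr_SS. unfold Cadd, Cmul, Cof; simpl. f_equal; ring.
Qed.

Lemma ivt_strict (f : R -> R) x y : continuity f -> x < y -> f x * f y < 0 ->
  exists z, x < z < y /\ f z = 0.
Proof.
  intros Hc Hxy Hp. destruct (IVT_cor f x y Hc) as [z [[H1 H2] H3]]; try lra.
  exists z. split; auto. split.
  - destruct H1 as [H1|H1]; auto. subst. rewrite H3 in Hp. lra.
  - destruct H2 as [H2|H2]; auto. subst. rewrite H3 in Hp. lra.
Qed.

Lemma dom (al be la mu : R) : al <> 0 -> Rabs mu < Rabs la ->
  exists M, forall n, (n >= M)%nat -> (al*la^n + be*mu^n) * (al * la^n) > 0.
Proof.
  intros Hal Hml.
  assert (Hla : Rabs la > 0) by (pose proof (Rabs_pos mu); lra).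
  assert (Hr : Rabs (mu / la) < 1).
  { unfold Rdiv. rewrite Rabs_mult, Rabs_inv. apply (Rmult_lt_reg_r (Rabs la)); auto.
    field_simplify; [lra|lra]. }
  assert (Hal' : Rabs al > 0) by (apply Rabs_pos_lt; auto).
  destruct (pow_lt_1_zero _ Hr (Rabs al / (Rabs be + 1))) as [M HM].
  { apply Rdiv_lt_0_compat; [lra| pose proof (Rabs_pos be); lra]. }
  exists M. intros n Hn. specialize (HM n Hn).
  assert (Hlan : Rabs (la ^ n) > 0) by (rewrite <- RPow_abs; apply pow_lt; lra).
  assert (Hlan0 : la <> 0) by (intro H; subst; rewrite Rabs_R0 in Hla; lra).
  assert (Hmu : Rabs (be * mu ^ n) < Rabs (al * la ^ n)).
  { set (t := Rabs ((mu / la) ^ n)) in *.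
    assert (Ht : Rabs (mu ^ n) = t * Rabs (la ^ n)).
    { unfold t. rewrite <- Rabs_mult, <- Rpow_mult_distr. f_equal. f_equal. field; auto. }
    rewrite !Rabs_mult, Ht.
    assert (0 <= t) by (unfold t; apply Rabs_pos).
    pose proof (Rabs_pos be).
    assert (Rabs be * t < Rabs al).
    { apply Rle_lt_trans with ((Rabs be + 1) * t); [nra|].
      apply (Rmult_lt_compat_l (Rabs be + 1)) in HM; [|lra].
      replace ((Rabs be + 1) * (Rabs al / (Rabs be + 1))) with (Rabs al) in HM by (field; lra). lra. }
    nra. }
  set (X := al * la ^ n) in *. set (Y := be * mu ^ n) in *.
  assert (0 < Rabs X) by (pose proof (Rabs_pos Y); lra).
  assert (X * X = Rabs X * Rabs X) by (rewrite <- Rabs_mult; rewrite Rabs_right; [reflexivity| apply Rle_ge; nra]).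
  assert (Rabs (X * Y) < X * X).
  { rewrite Rabs_mult, H0. apply Rmult_lt_compat_l; auto. }
  pose proof (Rle_abs (- (X*Y))). rewrite Rabs_Ropp in H2. nra.
Qed.

Lemma Zgen a b c d x1 x2 al1 be1 la1 mu1 al2 be2 la2 mu2 :
  x1 < x2 ->
  (forall n, Wr a b c d n x1 = al1*la1^n + be1*mu1^n) ->
  (forall n, Wr a b c d n x2 = al2*la2^n + be2*mu2^n) ->
  Rabs mu1 < Rabs la1 -> Rabs mu2 < Rabs la2 -> al1*al2 < 0 -> la1*la2 > 0 ->
  exists M, forall n, (n >= M)%nat -> exists z, x1 < z < x2 /\ Wr a b c d n z = 0.
Proof.
  intros Hx H1 H2 Hr1 Hr2 Hal Hla.
  assert (al1 <> 0) by (intro; subst; lra).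
  assert (al2 <> 0) by (intro; subst; lra).
  destruct (dom al1 be1 la1 mu1) as [M1 HM1]; auto.
  destruct (dom al2 be2 la2 mu2) as [M2 HM2]; auto.
  exists (max M1 M2). intros n Hn.
  specialize (HM1 n ltac:(lia)). specialize (HM2 n ltac:(lia)).
  rewrite <- H1 in HM1. rewrite <- H2 in HM2.
  apply ivt_strict; auto. apply Wr_cont.
  set (W1 := Wr a b c d n x1) in *. set (W2 := Wr a b c d n x2) in *.
  assert (HX : (al1 * la1^n) * (al2 * la2^n) < 0).
  { replace ((al1 * la1^n) * (al2 * la2^n)) with ((al1*al2) * (la1*la2)^n)
      by (rewrite Rpow_mult_distr; ring).
    assert (0 < (la1*la2)^n) by (apply pow_lt; lra). nra. }
  set (X1 := al1 * la1^n) in *. set (X2 := al2 * la2^n) in *.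
  assert (0 < (W1*X1)*(W2*X2)) by nra.
  replace ((W1*X1)*(W2*X2)) with ((W1*W2)*(X1*X2)) in H3 by ring.
  nra.
Qed.

Lemma lin_rec a b c d x (f : nat -> R) : f 0%nat = 1 -> f 1%nat = x ->
  (forall k, f (S (S k)) = (a*x+b) * f (S k) + (c*x+d) * f k) ->
  forall n, Wr a b c d n x = f n.
Proof.
  intros H0 H1 HS. apply two_step; auto.
  intros k IH0 IH1. rewrite Wr_SS, IH0, IH1, HS. reflexivity.
Qed.

Lemma Wr_dec a b c d x : 0 < (a*x+b)^2 + 4*(c*x+d) ->
  forall n, Wr a b c d n x =
   ((x - ((a*x+b) - sqrt ((a*x+b)^2 + 4*(c*x+d)))/2) / sqrt ((a*x+b)^2 + 4*(c*x+d)))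
      * (((a*x+b) + sqrt ((a*x+b)^2 + 4*(c*x+d)))/2)^n
 + ((((a*x+b) + sqrt ((a*x+b)^2 + 4*(c*x+d)))/2 - x) / sqrt ((a*x+b)^2 + 4*(c*x+d)))
      * (((a*x+b) - sqrt ((a*x+b)^2 + 4*(c*x+d)))/2)^n.
Proof.
  intros HD.
  set (D := (a*x+b)^2 + 4*(c*x+d)) in *. set (s := sqrt D).
  assert (Hs : s * s = D) by (apply sqrt_sqrt; lra).
  assert (Hs0 : 0 < s) by (apply sqrt_lt_R0; lra).
  set (A := a*x+b) in *. set (B := c*x+d) in *.
  apply lin_rec.
  - simpl. field. lra.
  - simpl. field. lra.
  - intros k. simpl.
    set (l1 := (A + s)/2). set (l2 := (A - s)/2).
    assert (E1 : l1 * l1 = A * l1 + B) by (unfold l1; unfold D in Hs; nra).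
    assert (E2 : l2 * l2 = A * l2 + B) by (unfold l2; unfold D in Hs; nra).
    replace (l1 * (l1 * l1^k)) with ((l1*l1) * l1^k) by ring.
    replace (l2 * (l2 * l2^k)) with ((l2*l2) * l2^k) by ring.
    rewrite E1, E2. change (a*x+b) with A. change (c*x+d) with B. ring.
Qed.

Lemma Wr_g a b c d x : (1-a)*x^2 - (b+c)*x - d = 0 -> forall n, Wr a b c d n x = x^n.
Proof.
  intros Hg. apply lin_rec; [reflexivity| simpl; ring |].
  intros k. simpl. replace (x * (x * x^k)) with ((x*x)*x^k) by ring.
  replace (x*x) with ((a*x+b)*x + (c*x+d)) by nra. ring.
Qed.

Lemma Wr_D a b c d x : (a*x+b)^2 + 4*(c*x+d) = 0 -> a*x+b <> 0 ->
  forall n, Wr a b c d n x * ((a*x+b)/2) =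
     ((a*x+b)/2)^n * ((a*x+b)/2 + INR n * (x - (a*x+b)/2)).
Proof.
  intros HD HA.
  set (l := (a*x+b)/2).
  assert (Hl : l <> 0) by (unfold l; lra).
  intros n. rewrite (lin_rec a b c d x (fun n => l^n * (l + INR n * (x - l)) / l)).
  - field; auto.
  - simpl. field; auto.
  - simpl. field; auto.
  - intros k. rewrite !S_INR. simpl.
    assert (HB : c*x+d = - (l*l)) by (unfold l; nra).
    assert (HA2 : a*x+b = 2*l) by (unfold l; field).
    rewrite HB, HA2. field; auto.
Qed.

Lemma cos_rec p t : cos (p + t) = 2 * cos t * cos p - cos (p - t).
Proof. rewrite cos_plus, cos_minus. ring. Qed.
Lemma sin_rec p t : sin (p + t) = 2 * cos t * sin p - sin (p - t).
Proof. rewrite sin_plus, sin_minus. ring. Qed.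

Lemma Wr_trig a b c d x t : c*x+d < 0 -> sin t <> 0 ->
  a*x+b = 2 * sqrt (-(c*x+d)) * cos t ->
  forall n, Wr a b c d n x = (sqrt (-(c*x+d)))^n *
    (cos (INR n * t) + ((x / sqrt (-(c*x+d)) - cos t) / sin t) * sin (INR n * t)).
Proof.
  intros HB Hs HA.
  set (r := sqrt (-(c*x+d))) in *.
  assert (Hr : r * r = -(c*x+d)) by (apply sqrt_sqrt; lra).
  assert (Hr0 : 0 < r) by (apply sqrt_lt_R0; lra).
  set (be := (x / r - cos t) / sin t).
  apply lin_rec.
  - simpl. rewrite Rmult_0_l, cos_0, sin_0. ring.
  - simpl. rewrite Rmult_1_l. unfold be. field. split; auto; lra.
  - intros k.
    replace (INR (S (S k)) * t) with (INR (S k) * t + t) by (rewrite (S_INR (S k)); ring).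
    replace (INR k * t) with (INR (S k) * t - t) at 1 2 by (rewrite (S_INR k); ring).
    rewrite cos_rec, sin_rec. rewrite HA.
    replace (c*x+d) with (-(r*r)) by lra. simpl. ring.
Qed.

Lemma m1_sq m : (-1)^m * (-1)^m = 1.
Proof. induction m; simpl; [ring| nra]. Qed.

Lemma kPI k : cos (INR k * PI) = (-1)^k /\ sin (INR k * PI) = 0.
Proof.
  induction k.
  - simpl. rewrite Rmult_0_l, cos_0, sin_0. split; reflexivity.
  - rewrite S_INR. replace ((INR k + 1) * PI) with (INR k * PI + PI) by ring.
    rewrite cos_plus, sin_plus, cos_PI, sin_PI. destruct IHk as [H1 H2].
    rewrite H1, H2. simpl. split; ring.
Qed.

Lemma sin_small (k : R) : 0 < k -> exists M, forall n, (n >= M)%nat ->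
  (3 <= n)%nat /\ sin (PI / INR n) ^ 2 < k /\ 0 < sin (PI / INR n) /\ 0 < cos (PI / INR n)
  /\ PI / INR n < PI.
Proof.
  intros Hk. destruct (INR_archimed k 16 Hk) as [N HN].
  exists (max N 3). intros n Hn.
  assert (H3 : (3 <= n)%nat) by lia.
  assert (Hn3 : 3 <= INR n) by (apply (le_INR 3 n) in H3; simpl in H3; lra).
  assert (HnN : INR N <= INR n) by (apply le_INR; lia).
  pose proof PI_RGT_0. pose proof PI_4.
  assert (Ht0 : 0 < PI / INR n) by (apply Rdiv_lt_0_compat; lra).
  assert (Ht1 : PI / INR n < PI / 2).
  { apply Rmult_lt_compat_l; [lra|]. apply Rinv_lt_contravar; lra. }
  split; [auto|]. split; [|split; [|split]].
  - pose proof (sin_lt_x _ Ht0). pose proof (sin_gt_0 (PI / INR n) Ht0 ltac:(lra)).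
    apply Rle_lt_trans with ((PI / INR n)^2); [apply pow_incr; lra|].
    apply Rle_lt_trans with (16 / INR n).
    + unfold Rdiv. replace ((PI * / INR n)^2) with (PI * PI * / INR n * / INR n) by (field; lra).
      apply Rmult_le_compat_r. left; apply Rinv_0_lt_compat; lra.
      apply Rle_trans with (PI * PI * / 3).
      * apply Rmult_le_compat_l; [nra|]. apply Rinv_le_contravar; lra.
      * nra.
    + apply (Rmult_lt_reg_r (INR n)); [lra|]. unfold Rdiv. rewrite Rmult_assoc, Rinv_l; [|lra]. nra.
  - apply sin_gt_0; lra.
  - apply cos_gt_0; lra.
  - lra.
Qed.

Lemma poly2_cont a b c d e : continuity (fun x => (a*x+b)^2 + e*(c*x+d)).
Proof. apply derivable_continuous. reg. Qed.

Lemma Wn_at_root a b c d x t m : c*x+d < 0 -> 0 < sin t ->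
  a*x+b = 2 * sqrt (-(c*x+d)) * cos t ->
  INR (S m) * t = INR m * PI ->
  Wr a b c d (S m) x = (sqrt (-(c*x+d)))^(S m) * (-1)^m.
Proof.
  intros HB Hs HA Ht. rewrite (Wr_trig a b c d x t HB ltac:(lra) HA (S m)).
  rewrite Ht. destruct (kPI m) as [H1 H2]. rewrite H1, H2. ring.
Qed.

Lemma root_A a b c d x cs : c*x+d < 0 -> 0 < cs ->
  (a*x+b)^2 + (4*cs^2)*(c*x+d) = 0 -> a*x+b < 0 ->
  a*x+b = - (2 * sqrt (-(c*x+d)) * cs).
Proof.
  intros HB Hcs Hh HA.
  assert (Hr : sqrt (-(c*x+d)) * sqrt (-(c*x+d)) = -(c*x+d)) by (apply sqrt_sqrt; lra).
  assert (Hr0 : 0 < sqrt (-(c*x+d))) by (apply sqrt_lt_R0; lra).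
  set (r := sqrt (-(c*x+d))) in *. set (A := a*x+b) in *.
  assert ((A + 2*r*cs) * (A - 2*r*cs) = 0) by nra.
  assert (A - 2*r*cs < 0) by nra.
  apply Rmult_integral in H. destruct H; nra.
Qed.

Lemma root_A' a b c d x cs : c*x+d < 0 -> 0 < cs ->
  (a*x+b)^2 + (4*cs^2)*(c*x+d) = 0 -> 0 < a*x+b ->
  a*x+b = 2 * sqrt (-(c*x+d)) * cs.
Proof.
  intros HB Hcs Hh HA.
  assert (Hr : sqrt (-(c*x+d)) * sqrt (-(c*x+d)) = -(c*x+d)) by (apply sqrt_sqrt; lra).
  assert (Hr0 : 0 < sqrt (-(c*x+d))) by (apply sqrt_lt_R0; lra).
  set (r := sqrt (-(c*x+d))) in *. set (A := a*x+b) in *.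
  assert ((A + 2*r*cs) * (A - 2*r*cs) = 0) by nra.
  assert (0 < A + 2*r*cs) by nra.
  apply Rmult_integral in H. destruct H; nra.
Qed.

Lemma TL a b c d p y : 0 < a -> p < y ->
  0 <= (a*p+b)^2 + 4*(c*p+d) -> (a*y+b)^2 + 4*(c*y+d) < 0 ->
  a*y+b < 0 -> c*p+d < 0 -> c*y+d < 0 ->
  (forall n, (-1)^n * Wr a b c d n p > 0) ->
  exists M, forall n, (n >= M)%nat -> exists z, p < z < y /\ Wr a b c d n z = 0.
Proof.
  intros Ha Hpy HDp HDy HAy HBp HBy HW.
  set (k := ((a*y+b)^2 + 4*(c*y+d)) / (4*(c*y+d))).
  assert (Hk : 0 < k).
  { unfold k. replace (((a*y+b)^2 + 4*(c*y+d)) / (4*(c*y+d))) with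
      ((-((a*y+b)^2 + 4*(c*y+d))) / (-(4*(c*y+d)))) by (field; lra).
    apply Rdiv_lt_0_compat; lra. }
  assert (Hk2 : k * (4*(c*y+d)) = (a*y+b)^2 + 4*(c*y+d)) by (unfold k; field; lra).
  destruct (sin_small k Hk) as [M HM]. exists M. intros n Hn.
  destruct (HM n Hn) as [H3 [Hsk [Hsn [Hcs HtPI]]]].
  set (t := PI / INR n) in *.
  pose proof (sin2_cos2 t) as Hsc. rewrite !Rsqr_pow2 in Hsc.
  set (sn := sin t) in *. set (cs := cos t) in *.
  destruct (ivt_strict (fun x => (a*x+b)^2 + (4*cs^2)*(c*x+d)) p y) as [x [Hx Hhx]].
  { apply poly2_cont. }
  { auto. }
  { replace (cs^2) with (1 - sn^2) by lra.
    assert (0 < sn^2) by (apply pow_lt; lra).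
    assert (0 < sn^2 * (-(c*p+d))) by (apply Rmult_lt_0_compat; lra).
    assert (0 < (k - sn^2)*(-(c*y+d))) by (apply Rmult_lt_0_compat; lra).
    assert (h1 : 0 < (a*p+b)^2 + (4*(1-sn^2))*(c*p+d)) by nra.
    assert (h2 : (a*y+b)^2 + (4*(1-sn^2))*(c*y+d) < 0) by nra.
    first [apply Rmult_pos_neg; assumption | apply Rmult_neg_pos; assumption | nra]. }
  simpl in Hhx.
  assert (HBx : c*x+d < 0).
  { destruct (Rle_lt_dec 0 c); nra. }
  assert (HAx : a*x+b < 0) by nra.
  pose proof (root_A a b c d x cs HBx Hcs Hhx HAx) as HA.
  destruct n as [|m]; [lia|].
  assert (HW1 : Wr a b c d (S m) x = (sqrt (-(c*x+d)))^(S m) * (-1)^m).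
  { apply (Wn_at_root a b c d x (PI - t) m HBx).
    - rewrite sin_PI_x. auto.
    - rewrite Rtrigo_facts.cos_pi_minus. fold cs. rewrite HA. ring.
    - unfold t. rewrite S_INR. field. pose proof (pos_INR m). lra. }
  assert (Hr0 : 0 < sqrt (-(c*x+d))) by (apply sqrt_lt_R0; lra).
  assert (Hneg : (-1)^(S m) * Wr a b c d (S m) x < 0).
  { rewrite HW1. simpl.
    replace (-1 * (-1)^m * (sqrt (-(c*x+d)) * sqrt (-(c*x+d))^m * (-1)^m)) with
      (- ((-1)^m * (-1)^m) * (sqrt (-(c*x+d)) * sqrt (-(c*x+d))^m)) by ring.
    rewrite m1_sq. assert (0 < sqrt (-(c*x+d))^m) by (apply pow_lt; lra). nra. }
  specialize (HW (S m)).
  destruct (ivt_strict (Wr a b c d (S m)) p x) as [z [Hz Hz0]].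
  { apply Wr_cont. }
  { lra. }
  { set (e := (-1)^(S m)) in *. assert (e*e = 1) by (unfold e; apply m1_sq).
    set (w1 := Wr a b c d (S m) p) in *. set (w2 := Wr a b c d (S m) x) in *.
    assert ((e*w1)*(e*w2) < 0) by nra.
    replace ((e*w1)*(e*w2)) with ((e*e)*(w1*w2)) in H0 by ring. rewrite H in H0. lra. }
  exists z. split; [lra|auto].
Qed.

Lemma TR a b c d p y : 0 < a -> y < p ->
  0 <= (a*p+b)^2 + 4*(c*p+d) -> (a*y+b)^2 + 4*(c*y+d) < 0 ->
  0 < a*y+b -> c*p+d < 0 -> c*y+d < 0 ->
  (forall n, Wr a b c d n p > 0) ->
  exists M, forall n, (n >= M)%nat -> exists z, y < z < p /\ Wr a b c d n z = 0.
Proof.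
  intros Ha Hpy HDp HDy HAy HBp HBy HW.
  set (k := ((a*y+b)^2 + 4*(c*y+d)) / (4*(c*y+d))).
  assert (Hk : 0 < k).
  { unfold k. replace (((a*y+b)^2 + 4*(c*y+d)) / (4*(c*y+d))) with
      ((-((a*y+b)^2 + 4*(c*y+d))) / (-(4*(c*y+d)))) by (field; lra).
    apply Rdiv_lt_0_compat; lra. }
  assert (Hk2 : k * (4*(c*y+d)) = (a*y+b)^2 + 4*(c*y+d)) by (unfold k; field; lra).
  destruct (sin_small k Hk) as [M HM]. exists M. intros n Hn.
  destruct (HM n Hn) as [H3 [Hsk [Hsn [Hcs HtPI]]]].
  set (t := PI / INR n) in *.
  pose proof (sin2_cos2 t) as Hsc. rewrite !Rsqr_pow2 in Hsc.
  set (sn := sin t) in *. set (cs := cos t) in *.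
  destruct (ivt_strict (fun x => (a*x+b)^2 + (4*cs^2)*(c*x+d)) y p) as [x [Hx Hhx]].
  { apply poly2_cont. }
  { auto. }
  { replace (cs^2) with (1 - sn^2) by lra.
    assert (0 < sn^2) by (apply pow_lt; lra).
    assert (0 < sn^2 * (-(c*p+d))) by (apply Rmult_lt_0_compat; lra).
    assert (0 < (k - sn^2)*(-(c*y+d))) by (apply Rmult_lt_0_compat; lra).
    assert (h1 : 0 < (a*p+b)^2 + (4*(1-sn^2))*(c*p+d)) by nra.
    assert (h2 : (a*y+b)^2 + (4*(1-sn^2))*(c*y+d) < 0) by nra.
    first [apply Rmult_pos_neg; assumption | apply Rmult_neg_pos; assumption | nra]. }
  simpl in Hhx.
  assert (HBx : c*x+d < 0).
  { destruct (Rle_lt_dec 0 c); nra. }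
  assert (0 < a*(x-y)) by (apply Rmult_lt_0_compat; lra).
  assert (HAx : 0 < a*x+b) by lra.
  pose proof (root_A' a b c d x cs HBx Hcs Hhx HAx) as HA.
  destruct n as [|m]; [lia|].
  assert (HW1 : Wr a b c d (S m) x = (sqrt (-(c*x+d)))^(S m) * (-1)^1%nat).
  { rewrite (Wr_trig a b c d x t HBx (Rgt_not_eq _ _ Hsn) HA (S m)).
    assert (Ht1 : INR (S m) * t = INR 1 * PI).
    { unfold t. replace (INR 1) with 1 by reflexivity. rewrite S_INR. field. pose proof (pos_INR m); lra. }
    rewrite Ht1.
    destruct (kPI 1) as [H1 H2]. rewrite H1, H2. ring. }
  assert (Hr0 : 0 < sqrt (-(c*x+d))) by (apply sqrt_lt_R0; lra).
  assert (Hneg : Wr a b c d (S m) x < 0).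
  { rewrite HW1. assert (0 < sqrt (-(c*x+d))^(S m)) by (apply pow_lt; lra). replace ((-1)^1%nat) with (-1) by (simpl; ring). lra. }
  specialize (HW (S m)).
  destruct (ivt_strict (Wr a b c d (S m)) x p) as [z [Hz Hz0]].
  { apply Wr_cont. }
  { lra. }
  { nra. }
  exists z. split; [lra|auto].
Qed.

Lemma dec_info a b c d x : 0 < (a*x+b)^2 + 4*(c*x+d) ->
  let s := sqrt ((a*x+b)^2 + 4*(c*x+d)) in
  0 < s /\ s * s = (a*x+b)^2 + 4*(c*x+d) /\
  (1-a)*x^2 - (b+c)*x - d = ((2*x - (a*x+b))^2 - s*s)/4.
Proof.
  intros HD s. assert (s*s = (a*x+b)^2 + 4*(c*x+d)) by (apply sqrt_sqrt; lra).
  split; [apply sqrt_lt_R0; lra|]. split; auto. rewrite H. field.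
Qed.

Lemma sqlt1 L s : 0 < s -> L*L < s*s -> L < s.
Proof. intros. nra. Qed.
Lemma sqlt2 L s : 0 < L -> 0 < s -> s*s < L*L -> s < L.
Proof. intros. nra. Qed.

Lemma ZgL a b c d x1 x2 : x1 < x2 ->
  0 < (a*x1+b)^2 + 4*(c*x1+d) -> 0 < (a*x2+b)^2 + 4*(c*x2+d) ->
  a*x1+b < 0 -> a*x2+b < 0 ->
  (1-a)*x1^2 - (b+c)*x1 - d < 0 -> 0 < (1-a)*x2^2 - (b+c)*x2 - d ->
  0 < 2*x2 - (a*x2+b) ->
  exists M, forall n, (n >= M)%nat -> exists z, x1 < z < x2 /\ Wr a b c d n z = 0.
Proof.
  intros Hx HD1 HD2 HA1 HA2 Hg1 Hg2 HL2.
  destruct (dec_info a b c d x1 HD1) as [Hs1 [Hss1 Hgi1]].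
  destruct (dec_info a b c d x2 HD2) as [Hs2 [Hss2 Hgi2]].
  set (s1 := sqrt ((a*x1+b)^2 + 4*(c*x1+d))) in *.
  set (s2 := sqrt ((a*x2+b)^2 + 4*(c*x2+d))) in *.
  apply (Zgen a b c d x1 x2
     ((((a*x1+b) + s1)/2 - x1)/s1) ((x1 - ((a*x1+b) - s1)/2)/s1) (((a*x1+b) - s1)/2) (((a*x1+b) + s1)/2)
     ((((a*x2+b) + s2)/2 - x2)/s2) ((x2 - ((a*x2+b) - s2)/2)/s2) (((a*x2+b) - s2)/2) (((a*x2+b) + s2)/2)); auto.
  - intros n. rewrite (Wr_dec a b c d x1 HD1). fold s1. ring.
  - intros n. rewrite (Wr_dec a b c d x2 HD2). fold s2. ring.
  - rewrite (Rabs_left (((a*x1+b) - s1)/2)); [|lra]. apply Rabs_def1; lra.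
  - rewrite (Rabs_left (((a*x2+b) - s2)/2)); [|lra]. apply Rabs_def1; lra.
  - assert (H1 : 0 < ((a*x1+b) + s1)/2 - x1).
    { set (L := 2*x1 - (a*x1+b)) in *. assert (L < s1) by (apply sqlt1; auto; nra). unfold L in *; lra. }
    assert (H2 : ((a*x2+b) + s2)/2 - x2 < 0).
    { set (L := 2*x2 - (a*x2+b)) in *. assert (s2 < L) by (apply sqlt2; auto; nra). unfold L in *; lra. }
    assert (0 < (((a*x1+b) + s1)/2 - x1)/s1) by (apply Rdiv_lt_0_compat; lra).
    assert ((((a*x2+b) + s2)/2 - x2)/s2 < 0).
    { unfold Rdiv. apply Rmult_neg_pos; [lra| apply Rinv_0_lt_compat; lra]. }
    nra.
  - nra.
Qed.

Lemma ZgR a b c d x1 x2 : x1 < x2 ->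
  0 < (a*x1+b)^2 + 4*(c*x1+d) -> 0 < (a*x2+b)^2 + 4*(c*x2+d) ->
  0 < a*x1+b -> 0 < a*x2+b ->
  0 < (1-a)*x1^2 - (b+c)*x1 - d -> (1-a)*x2^2 - (b+c)*x2 - d < 0 ->
  2*x1 - (a*x1+b) < 0 ->
  exists M, forall n, (n >= M)%nat -> exists z, x1 < z < x2 /\ Wr a b c d n z = 0.
Proof.
  intros Hx HD1 HD2 HA1 HA2 Hg1 Hg2 HL1.
  destruct (dec_info a b c d x1 HD1) as [Hs1 [Hss1 Hgi1]].
  destruct (dec_info a b c d x2 HD2) as [Hs2 [Hss2 Hgi2]].
  set (s1 := sqrt ((a*x1+b)^2 + 4*(c*x1+d))) in *.
  set (s2 := sqrt ((a*x2+b)^2 + 4*(c*x2+d))) in *.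
  apply (Zgen a b c d x1 x2
     ((x1 - ((a*x1+b) - s1)/2)/s1) ((((a*x1+b) + s1)/2 - x1)/s1) (((a*x1+b) + s1)/2) (((a*x1+b) - s1)/2)
     ((x2 - ((a*x2+b) - s2)/2)/s2) ((((a*x2+b) + s2)/2 - x2)/s2) (((a*x2+b) + s2)/2) (((a*x2+b) - s2)/2)); auto.
  - intros n. rewrite (Wr_dec a b c d x1 HD1). fold s1. ring.
  - intros n. rewrite (Wr_dec a b c d x2 HD2). fold s2. ring.
  - rewrite (Rabs_right (((a*x1+b) + s1)/2)); [|lra]. apply Rabs_def1; lra.
  - rewrite (Rabs_right (((a*x2+b) + s2)/2)); [|lra]. apply Rabs_def1; lra.
  - assert (H1 : x1 - ((a*x1+b) - s1)/2 < 0).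
    { set (L := 2*x1 - (a*x1+b)) in *. assert (s1 < -L) by (apply sqlt2; auto; nra). unfold L in *; lra. }
    assert (H2 : 0 < x2 - ((a*x2+b) - s2)/2).
    { set (L := 2*x2 - (a*x2+b)) in *. assert (-L < s2) by (apply sqlt1; auto; nra). unfold L in *; lra. }
    assert (0 < (x2 - ((a*x2+b) - s2)/2)/s2) by (apply Rdiv_lt_0_compat; lra).
    assert ((x1 - ((a*x1+b) - s1)/2)/s1 < 0).
    { unfold Rdiv. apply Rmult_neg_pos; [lra| apply Rinv_0_lt_compat; lra]. }
    nra.
  - nra.
Qed.

Fixpoint best (Q : nat -> Prop) (k : nat) : nat :=
  match k with
  | O => O
  | S k' => if excluded_middle_informative (Q (S k')) then S k' else best Q k'
  end.

Lemma best_Q Q : Q O -> forall k, Q (best Q k).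
Proof.
  intros H0 k; induction k; simpl; auto.
  destruct (excluded_middle_informative (Q (S k))); auto.
Qed.

Lemma best_ge Q : forall k j, (j <= k)%nat -> Q j -> (j <= best Q k)%nat.
Proof.
  induction k; intros j Hj HQ; simpl.
  - lia.
  - destruct (excluded_middle_informative (Q (S k))) as [H|H]; [lia|].
    destruct (Nat.eq_dec j (S k)); [subst; tauto|]. apply IHk; auto; lia.
Qed.

Lemma seq_lim a b c d p :
  (forall eps, eps > 0 -> exists M, forall n, (n >= M)%nat ->
       exists z, Rabs (z - p) < eps /\ Wr a b c d n z = 0) ->
  limit_of_zeros a b c d p.
Proof.
  intros H.
  set (Q := fun n k => exists z, Rabs (z - p) < / (INR k + 1) /\ Wr a b c d n z = 0).
  destruct (H 1 ltac:(lra)) as [N HN].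
  assert (E : forall n, exists z, (N <= n)%nat ->
      Rabs (z - p) < / (INR (best (Q n) n) + 1) /\ Wr a b c d n z = 0).
  { intros n. destruct (classic (N <= n)%nat) as [Hn|Hn].
    - assert (HQ : Q n (best (Q n) n)).
      { apply best_Q. unfold Q. destruct (HN n Hn) as [z Hz]. exists z.
        simpl. replace (/ (0 + 1)) with 1 by field. auto. }
      destruct HQ as [z Hz]. exists z. auto.
    - exists 0. intros; contradiction. }
  set (zs := fun n => proj1_sig (constructive_indefinite_description _ (E n))).
  assert (Hzs : forall n, (N <= n)%nat ->
      Rabs (zs n - p) < / (INR (best (Q n) n) + 1) /\ Wr a b c d n (zs n) = 0).
  { intros n. unfold zs. destruct (constructive_indefinite_description _ (E n)) as [z Hz]. simpl. auto. }
  exists N, (fun n => (zs n, 0)). split.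
  - intros n Hn. rewrite Wc_real. destruct (Hzs n Hn) as [_ H0]. rewrite H0. reflexivity.
  - intros eps Heps. simpl.
    set (e := Rmin eps 1).
    assert (He : 0 < e) by (unfold e; apply Rmin_pos; lra).
    assert (He1 : e <= 1) by (unfold e; apply Rmin_r).
    assert (He2 : e <= eps) by (unfold e; apply Rmin_l).
    destruct (INR_archimed e 1 He) as [k Hk].
    assert (Hk1 : / (INR k + 1) < e).
    { apply (Rmult_lt_reg_r (INR k + 1)); [pose proof (pos_INR k); lra|].
      rewrite Rinv_l; [|pose proof (pos_INR k); lra]. nra. }
    destruct (H (/ (INR k + 1))) as [Mk HMk].
    { apply Rinv_0_lt_compat. pose proof (pos_INR k); lra. }
    exists (max N (max Mk k)). intros n Hn.
    destruct (Hzs n ltac:(lia)) as [Hz _].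
    assert (HQk : Q n k) by (unfold Q; destruct (HMk n ltac:(lia)) as [z Hz']; exists z; auto).
    pose proof (best_ge (Q n) n k ltac:(lia) HQk) as Hb.
    apply le_INR in Hb.
    assert (/ (INR (best (Q n) n) + 1) <= / (INR k + 1)).
    { apply Rinv_le_contravar; [pose proof (pos_INR k); lra| lra]. }
    assert (Habs : Rabs (zs n - p) < e) by lra.
    unfold Rsqr. rewrite Rmult_0_l, Rplus_0_r.
    assert (Rabs (zs n - p) * Rabs (zs n - p) < e).
    { pose proof (Rabs_pos (zs n - p)). nra. }
    rewrite <- Rabs_mult in H1. pose proof (Rle_abs ((zs n - p) * (zs n - p))). lra.
Qed.

Lemma U_D a b c d p q : 0 < a -> p < q ->
  (a*p+b)^2 + 4*(c*p+d) = 0 -> a*p+b < 0 -> c*p+d < 0 -> 2*p - (a*p+b) <= 0 ->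
  (forall y, p < y < q -> (a*y+b)^2 + 4*(c*y+d) < 0 /\ a*y+b < 0 /\ c*y+d < 0) ->
  (forall n, (-1)^n * Wr a b c d n p > 0) /\ limit_of_zeros a b c d p.
Proof.
  intros Ha Hpq HD HA HB HL Hy.
  assert (Hpos : forall n, (-1)^n * Wr a b c d n p > 0).
  { intros n. pose proof (Wr_D a b c d p HD ltac:(lra) n) as E.
    set (l := (a*p+b)/2) in *.
    assert (Hl : l < 0) by (unfold l; lra).
    assert (He : p - l <= 0) by (unfold l; lra).
    assert (H1 : 0 < (-1)^n * l^n) by (rewrite <- Rpow_mult_distr; apply pow_lt; lra).
    assert (H2 : l + INR n * (p - l) < 0) by (pose proof (pos_INR n); nra).
    assert (((-1)^n * Wr a b c d n p) * l < 0).
    { replace (((-1)^n * Wr a b c d n p) * l) with ((-1)^n * (Wr a b c d n p * l)) by ring.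
      rewrite E. replace ((-1)^n * (l^n * (l + INR n * (p - l)))) with (((-1)^n * l^n) * (l + INR n * (p - l))) by ring.
      nra. }
    nra. }
  split; auto.
  apply seq_lim. intros eps Heps.
  set (y := p + Rmin eps (q - p) / 2).
  assert (Hm : 0 < Rmin eps (q-p)) by (apply Rmin_pos; lra).
  assert (Hm1 : Rmin eps (q-p) <= eps) by apply Rmin_l.
  assert (Hm2 : Rmin eps (q-p) <= q - p) by apply Rmin_r.
  destruct (Hy y ltac:(unfold y; lra)) as [H1 [H2 H3]].
  destruct (TL a b c d p y Ha ltac:(unfold y; lra) ltac:(lra) H1 H2 HB H3 Hpos) as [M HM].
  exists M. intros n Hn. destruct (HM n Hn) as [z [Hz Hz0]]. exists z. split; auto.
  rewrite Rabs_right; unfold y in *; lra.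
Qed.

Lemma V_D a b c d p q : 0 < a -> q < p ->
  (a*p+b)^2 + 4*(c*p+d) = 0 -> 0 < a*p+b -> c*p+d < 0 -> 0 <= 2*p - (a*p+b) ->
  (forall y, q < y < p -> (a*y+b)^2 + 4*(c*y+d) < 0 /\ 0 < a*y+b /\ c*y+d < 0) ->
  (forall n, Wr a b c d n p > 0) /\ limit_of_zeros a b c d p.
Proof.
  intros Ha Hpq HD HA HB HL Hy.
  assert (Hpos : forall n, Wr a b c d n p > 0).
  { intros n. pose proof (Wr_D a b c d p HD ltac:(lra) n) as E.
    set (l := (a*p+b)/2) in *.
    assert (Hl : 0 < l) by (unfold l; lra).
    assert (He : 0 <= p - l) by (unfold l; lra).
    assert (H1 : 0 < l^n) by (apply pow_lt; lra).
    assert (H2 : 0 < l + INR n * (p - l)) by (pose proof (pos_INR n); nra).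
    assert (Wr a b c d n p * l > 0) by (rewrite E; nra).
    nra. }
  split; auto.
  apply seq_lim. intros eps Heps.
  set (y := p - Rmin eps (p - q) / 2).
  assert (Hm : 0 < Rmin eps (p-q)) by (apply Rmin_pos; lra).
  assert (Hm1 : Rmin eps (p-q) <= eps) by apply Rmin_l.
  assert (Hm2 : Rmin eps (p-q) <= p - q) by apply Rmin_r.
  destruct (Hy y ltac:(unfold y; lra)) as [H1 [H2 H3]].
  destruct (TR a b c d p y Ha ltac:(unfold y; lra) ltac:(lra) H1 H2 HB H3 Hpos) as [M HM].
  exists M. intros n Hn. destruct (HM n Hn) as [z [Hz Hz0]]. exists z. split; auto.
  rewrite Rabs_left; unfold y in *; lra.
Qed.

Lemma U_G a b c d p lo hi : lo < p < hi -> p < 0 ->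
  (1-a)*p^2 - (b+c)*p - d = 0 ->
  (forall x, lo < x < hi -> 0 < (a*x+b)^2 + 4*(c*x+d) /\ a*x+b < 0) ->
  (forall x, lo < x < p -> (1-a)*x^2 - (b+c)*x - d < 0) ->
  (forall x, p < x < hi -> 0 < (1-a)*x^2 - (b+c)*x - d /\ 0 < 2*x - (a*x+b)) ->
  (forall n, (-1)^n * Wr a b c d n p > 0) /\ limit_of_zeros a b c d p.
Proof.
  intros Hp Hp0 Hg HDA Hlo Hhi. split.
  - intros n. rewrite (Wr_g a b c d p Hg). rewrite <- Rpow_mult_distr. apply pow_lt. lra.
  - apply seq_lim. intros eps Heps.
    set (de := Rmin eps (Rmin (p - lo) (hi - p)) / 2).
    assert (Hm : 0 < Rmin eps (Rmin (p - lo) (hi - p))) by (apply Rmin_pos; [lra| apply Rmin_pos; lra]).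
    assert (Hm1 : Rmin eps (Rmin (p - lo) (hi - p)) <= eps) by apply Rmin_l.
    assert (Hm2 : Rmin eps (Rmin (p - lo) (hi - p)) <= Rmin (p - lo) (hi - p)) by apply Rmin_r.
    assert (Hm3 : Rmin (p - lo) (hi - p) <= p - lo) by apply Rmin_l.
    assert (Hm4 : Rmin (p - lo) (hi - p) <= hi - p) by apply Rmin_r.
    assert (Hde : 0 < de) by (unfold de; lra).
    destruct (HDA (p - de) ltac:(unfold de in *; lra)) as [D1 A1].
    destruct (HDA (p + de) ltac:(unfold de in *; lra)) as [D2 A2].
    destruct (Hhi (p + de) ltac:(unfold de in *; lra)) as [G2 L2].
    pose proof (Hlo (p - de) ltac:(unfold de in *; lra)) as G1.
    destruct (ZgL a b c d (p - de) (p + de) ltac:(lra) D1 D2 A1 A2 G1 G2 L2) as [M HM].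
    exists M. intros n Hn. destruct (HM n Hn) as [z [Hz Hz0]]. exists z. split; auto.
    apply Rabs_def1; unfold de in *; lra.
Qed.

Lemma V_G a b c d p lo hi : lo < p < hi -> 0 < p ->
  (1-a)*p^2 - (b+c)*p - d = 0 ->
  (forall x, lo < x < hi -> 0 < (a*x+b)^2 + 4*(c*x+d) /\ 0 < a*x+b) ->
  (forall x, lo < x < p -> 0 < (1-a)*x^2 - (b+c)*x - d /\ 2*x - (a*x+b) < 0) ->
  (forall x, p < x < hi -> (1-a)*x^2 - (b+c)*x - d < 0) ->
  (forall n, Wr a b c d n p > 0) /\ limit_of_zeros a b c d p.
Proof.
  intros Hp Hp0 Hg HDA Hlo Hhi. split.
  - intros n. rewrite (Wr_g a b c d p Hg). apply pow_lt. lra.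
  - apply seq_lim. intros eps Heps.
    set (de := Rmin eps (Rmin (p - lo) (hi - p)) / 2).
    assert (Hm : 0 < Rmin eps (Rmin (p - lo) (hi - p))) by (apply Rmin_pos; [lra| apply Rmin_pos; lra]).
    assert (Hm1 : Rmin eps (Rmin (p - lo) (hi - p)) <= eps) by apply Rmin_l.
    assert (Hm2 : Rmin eps (Rmin (p - lo) (hi - p)) <= Rmin (p - lo) (hi - p)) by apply Rmin_r.
    assert (Hm3 : Rmin (p - lo) (hi - p) <= p - lo) by apply Rmin_l.
    assert (Hm4 : Rmin (p - lo) (hi - p) <= hi - p) by apply Rmin_r.
    assert (Hde : 0 < de) by (unfold de; lra).
    destruct (HDA (p - de) ltac:(unfold de in *; lra)) as [D1 A1].
    destruct (HDA (p + de) ltac:(unfold de in *; lra)) as [D2 A2].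
    destruct (Hlo (p - de) ltac:(unfold de in *; lra)) as [G1 L1].
    pose proof (Hhi (p + de) ltac:(unfold de in *; lra)) as G2.
    destruct (ZgR a b c d (p - de) (p + de) ltac:(lra) D1 D2 A1 A2 G1 G2 L1) as [M HM].
    exists M. intros n Hn. destruct (HM n Hn) as [z [Hz Hz0]]. exists z. split; auto.
    apply Rabs_def1; unfold de in *; lra.
Qed.

Lemma DD_eq a b c d : 0 < a -> DeltaD a b c d = c^2 + a*(b*c - a*d).
Proof. intros. unfold DeltaD, xA. field. lra. Qed.

Lemma Dfactor a b c d x : 0 < a -> 0 <= DeltaD a b c d ->
  (a*x+b)^2 + 4*(c*x+d) = a^2 * (x - xDm a b c d) * (x - xDp a b c d).
Proof.
  intros Ha HD. unfold xDm, xDp.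
  assert (Hr : sqrt (DeltaD a b c d) * sqrt (DeltaD a b c d) = DeltaD a b c d) by (apply sqrt_sqrt; auto).
  set (r := sqrt (DeltaD a b c d)) in *.
  transitivity (a^2 * (x - xA a b + 2*c/a^2)^2 - 4 * (r*r) / a^2).
  - rewrite Hr. unfold DeltaD, xA. field. lra.
  - field. lra.
Qed.

Lemma xD_order a b c d : 0 < a -> 0 < c -> c^2 < DeltaD a b c d ->
  xDm a b c d < xA a b < xDp a b c d.
Proof.
  intros Ha Hc HD. unfold xDm, xDp.
  assert (Hr : sqrt (DeltaD a b c d) * sqrt (DeltaD a b c d) = DeltaD a b c d) by (apply sqrt_sqrt; nra).
  assert (Hr0 : 0 <= sqrt (DeltaD a b c d)) by apply sqrt_pos.
  set (r := sqrt (DeltaD a b c d)) in *.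
  assert (c < r) by nra.
  assert (0 < a^2) by nra.
  split.
  - assert ((-2*c - 2*r)/a^2 < 0) by (unfold Rdiv; apply Rmult_neg_pos; [lra| apply Rinv_0_lt_compat; lra]). lra.
  - assert (0 < (-2*c + 2*r)/a^2) by (apply Rdiv_lt_0_compat; lra). lra.
Qed.

Lemma g_id a b c d x : (1-a)*x^2 - (b+c)*x - d = ((2*x - (a*x+b))^2 - ((a*x+b)^2 + 4*(c*x+d)))/4.
Proof. field. Qed.

Lemma F_id a b c d : a <> 2 ->
  4 * Ff a b c d = (2-a)^2 * ((a*(b/(2-a))+b)^2 + 4*(c*(b/(2-a))+d)).
Proof. intros. unfold Ff. field. intro. apply H. lra. Qed.

Lemma gfactor a b c d x : a <> 1 -> 0 <= Deltag a b c d ->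
  (1-a)*x^2 - (b+c)*x - d = (1-a) * (x - xgm a b c d) * (x - xgp a b c d).
Proof.
  intros Ha HD. unfold xgm, xgp. destruct (Req_EM_T a 1) as [E|_]; [contradiction|].
  assert (Hr : sqrt (Deltag a b c d) * sqrt (Deltag a b c d) = Deltag a b c d) by (apply sqrt_sqrt; auto).
  set (r := sqrt (Deltag a b c d)) in *.
  assert (Habs : Rabs (1-a) * Rabs (1-a) = (1-a)*(1-a)).
  { rewrite <- Rabs_mult. apply Rabs_right. apply Rle_ge. nra. }
  assert (Habs0 : Rabs (1-a) <> 0) by (apply Rabs_no_R0; lra).
  set (q := Rabs (1-a)) in *.
  transitivity ((1-a) * (x - (b+c)/(2*(1-a)))^2 - (r*r)/(4*(1-a))).
  - rewrite Hr. unfold Deltag. field. lra.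
  - transitivity ((1-a) * (x - (b+c)/(2*(1-a)))^2 - (1-a) * (r*r)/(4*(q*q))).
    + rewrite Habs. field. lra.
    + field. split; auto. lra.
Qed.

Lemma xg_le a b c d : xgm a b c d <= xgp a b c d.
Proof.
  unfold xgm, xgp. destruct (Req_EM_T a 1); [lra|].
  assert (0 <= sqrt (Deltag a b c d) / (2 * Rabs (1-a))).
  { apply Rmult_le_pos; [apply sqrt_pos|]. left. apply Rinv_0_lt_compat.
    assert (0 < Rabs (1-a)) by (apply Rabs_pos_lt; lra). lra. }
  lra.
Qed.

Lemma betw_pos k x r1 r2 : 0 < k -> r1 <= r2 -> k*(x-r1)*(x-r2) < 0 -> r1 < x < r2.
Proof.
  intros Hk Hr H. destruct (Rlt_le_dec r1 x); destruct (Rlt_le_dec x r2); try lra.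
  - assert (0 <= (x-r1)*(x-r2)) by (apply Rmult_le_pos; lra). nra.
  - assert (0 <= (r1-x)*(r2-x)) by (apply Rmult_le_pos; lra). nra.
  - assert (0 <= (r1-x)*(r2-x)) by (apply Rmult_le_pos; lra). nra.
Qed.
Lemma betw_neg k x r1 r2 : k < 0 -> r1 <= r2 -> k*(x-r1)*(x-r2) > 0 -> r1 < x < r2.
Proof.
  intros Hk Hr H. apply (betw_pos (-k)); auto; lra.
Qed.
Lemma out_pos k x r1 r2 : 0 < k -> r1 <= r2 -> k*(x-r1)*(x-r2) > 0 -> x < r1 \/ r2 < x.
Proof.
  intros Hk Hr H. destruct (Rlt_le_dec x r1); [left; auto|]. destruct (Rlt_le_dec r2 x); [right; auto|].
  assert (0 <= (x-r1)*(r2-x)) by (apply Rmult_le_pos; lra). nra.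
Qed.
Lemma out_neg k x r1 r2 : k < 0 -> r1 <= r2 -> k*(x-r1)*(x-r2) < 0 -> x < r1 \/ r2 < x.
Proof.
  intros Hk Hr H. apply (out_pos (-k)); auto; lra.
Qed.
Lemma prod3_neg k x y : 0 < k -> 0 < x -> y < 0 -> k*x*y < 0.
Proof. intros. assert (0 < k*x) by nra. nra. Qed.
Lemma prod3_pos k x y : 0 < k -> 0 < x -> 0 < y -> 0 < k*x*y.
Proof. intros. assert (0 < k*x) by nra. nra. Qed.
Lemma prod3_nnn k x y : k < 0 -> x < 0 -> y < 0 -> k*x*y < 0.
Proof. intros. assert (0 < k*x) by nra. nra. Qed.
Lemma prod3_npn k x y : k < 0 -> 0 < x -> y < 0 -> 0 < k*x*y.
Proof. intros. assert (k*x < 0) by nra. nra. Qed.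
Lemma prod3_npp k x y : k < 0 -> 0 < x -> 0 < y -> k*x*y < 0.
Proof. intros. assert (k*x < 0) by nra. nra. Qed.

Lemma assemble a b c d U V :
  uv_real a b c d ->
  U <= xDm a b c d -> xDm a b c d < xA a b -> xA a b < xDp a b c d ->
  xDp a b c d <= V -> V < xB c d -> U < 0 -> 0 < V ->
  (forall n : nat, (-1) ^ n * Wr a b c d n U > 0) ->
  (forall n : nat, Wr a b c d n V > 0) ->
  limit_of_zeros a b c d U -> limit_of_zeros a b c d V ->
  uv_real a b c d /\
  U <= xDm a b c d /\ xDm a b c d < xA a b /\ xA a b < xDp a b c d /\
  xDp a b c d <= V /\ V < xB c d /\
  U < 0 /\ 0 < V /\
  (forall n : nat, (-1) ^ n * Wr a b c d n U > 0 /\ Wr a b c d n V > 0) /\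
  limit_of_zeros a b c d U /\ limit_of_zeros a b c d V.
Proof.
  intros H H0 H1 H2 H3 H4 H5 H6 H7 H8 H9 H10.
  exact (conj H (conj H0 (conj H1 (conj H2 (conj H3 (conj H4 (conj H5 (conj H6
    (conj (fun n => conj (H7 n) (H8 n)) (conj H9 H10)))))))))).
Qed.

Theorem lemma3p2 (a b c d : R) (ha : 0 < a) (hc : 0 < c) (hb : b < 0) (hd : d < 0)
  (hAB : xA a b < xB c d) :
  uv_real a b c d /\
  u a b c d <= xDm a b c d /\ xDm a b c d < xA a b /\ xA a b < xDp a b c d /\
  xDp a b c d <= v a b c d /\ v a b c d < xB c d /\
  u a b c d < 0 /\ 0 < v a b c d /\
  (forall n : nat, (-1) ^ n * Wr a b c d n (u a b c d) > 0 /\ Wr a b c d n (v a b c d) > 0) /\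
  limit_of_zeros a b c d (u a b c d) /\ limit_of_zeros a b c d (v a b c d).
Proof.
  assert (HxA : xA a b = -b/a) by reflexivity.
  assert (HxB : xB c d = -d/c) by reflexivity.
  assert (HK : 0 < b*c - a*d).
  { rewrite HxA, HxB in hAB.
    assert (E1 : -b/a * (a*c) = -b*c) by (field; lra).
    assert (E2 : -d/c * (a*c) = -d*a) by (field; lra).
    assert (0 < a*c) by nra.
    apply (Rmult_lt_compat_r (a*c)) in hAB; auto. lra. }
  assert (HDD : c^2 < DeltaD a b c d) by (rewrite DD_eq; auto; nra).
  destruct (xD_order a b c d ha hc HDD) as [Hm Hp].
  assert (Dfac := fun x => Dfactor a b c d x ha ltac:(nra)).
  assert (HxA0 : 0 < xA a b) by (rewrite HxA; apply Rdiv_lt_0_compat; lra).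
  assert (HAneg : forall y, y < xA a b -> a*y+b < 0).
  { intros y Hy. rewrite HxA in Hy. assert (a*y < a*(-b/a)) by (apply Rmult_lt_compat_l; auto).
    replace (a*(-b/a)) with (-b) in H by (field; lra). lra. }
  assert (HApos : forall y, xA a b < y -> 0 < a*y+b).
  { intros y Hy. rewrite HxA in Hy. assert (a*(-b/a) < a*y) by (apply Rmult_lt_compat_l; auto).
    replace (a*(-b/a)) with (-b) in H by (field; lra). lra. }
  assert (HBneg : forall y, y < xB c d -> c*y+d < 0).
  { intros y Hy. rewrite HxB in Hy. assert (c*y < c*(-d/c)) by (apply Rmult_lt_compat_l; auto).
    replace (c*(-d/c)) with (-d) in H by (field; lra). lra. }
  assert (HBxB : c * xB c d + d = 0) by (rewrite HxB; field; lra).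
  unfold u, v, uv.
  set (m := xDm a b c d) in *. set (p := xDp a b c d) in *.
  set (xa := xA a b) in *. set (xb := xB c d) in *.
  assert (Ha2 : 0 < a^2) by nra.
  assert (HDm : (a*m+b)^2 + 4*(c*m+d) = 0) by (rewrite Dfac; ring).
  assert (HDp : (a*p+b)^2 + 4*(c*p+d) = 0) by (rewrite Dfac; ring).
  assert (HDneg : forall y, m < y < p -> (a*y+b)^2 + 4*(c*y+d) < 0).
  { intros y Hy. rewrite Dfac. assert (0 < (y - m) * (p - y)) by (apply Rmult_lt_0_compat; lra). nra. }
  assert (HDposL : forall y, y < m -> 0 < (a*y+b)^2 + 4*(c*y+d)).
  { intros y Hy. rewrite Dfac. assert (0 < (m - y) * (p - y)) by (apply Rmult_lt_0_compat; lra). nra. }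
  assert (HDposR : forall y, p < y -> 0 < (a*y+b)^2 + 4*(c*y+d)).
  { intros y Hy. rewrite Dfac. assert (0 < (y - m) * (y - p)) by (apply Rmult_lt_0_compat; lra). nra. }
  assert (HpB : p < xb).
  { assert (HAB : 0 < a*xb+b) by (apply HApos; auto).
    assert (0 < (a*xb+b)^2 + 4*(c*xb+d)) by (rewrite HBxB; nra).
    rewrite Dfac in H. destruct (Rlt_le_dec p xb); auto.
    assert (0 <= (xb - m) * (p - xb)) by (apply Rmult_le_pos; lra). nra. }
  assert (VD : 0 <= 2*p - (a*p+b) -> (forall n, Wr a b c d n p > 0) /\ limit_of_zeros a b c d p).
  { intros HL. apply (V_D a b c d p xa ha Hp HDp (HApos p Hp) (HBneg p HpB) HL).
    intros y Hy. split; [apply HDneg; lra|]. split; [apply HApos; lra| apply HBneg; lra]. }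
  assert (UD : 2*m - (a*m+b) <= 0 -> (forall n, (-1)^n * Wr a b c d n m > 0) /\ limit_of_zeros a b c d m).
  { intros HL. apply (U_D a b c d m xa ha Hm HDm (HAneg m Hm) (HBneg m ltac:(lra)) HL).
    intros y Hy. split; [apply HDneg; lra|]. split; [apply HAneg; lra| apply HBneg; lra]. }
  assert (Hg0 : 0 < (1-a)*0^2 - (b+c)*0 - d) by lra.
  assert (Hgm : forall x, (1-a)*x^2 - (b+c)*x - d = (2*x - (a*x+b))^2/4 - ((a*x+b)^2 + 4*(c*x+d))/4)
    by (intros; field).
  destruct (Rlt_dec a 2) as [a2|a2].
  - set (w := b/(2-a)).
    assert (Hw : (2-a)*w = b) by (unfold w; field; lra).
    assert (Hw0 : w < 0) by nra.
    assert (HFw : 4 * Ff a b c d = (2-a)^2 * ((a*w+b)^2 + 4*(c*w+d))) by (unfold w; apply F_id; lra).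
    assert (HLw : 2*w - (a*w+b) = 0) by lra.
    assert (Hwp : w < p) by lra.
    assert (Hda : 0 < (2-a)^2) by nra.
    destruct (Rle_dec (Ff a b c d) 0) as [F0|F0].
    +
      cbn [fst snd].
      assert (HDw : (a*w+b)^2 + 4*(c*w+d) <= 0) by nra.
      assert (Hmw : m <= w).
      { destruct (Rle_lt_dec m w); auto. rewrite Dfac in HDw.
        assert (0 < (m - w) * (p - w)) by (apply Rmult_lt_0_compat; lra). nra. }
      apply assemble.
      all: try change (xDm a b c d) with m; try change (xDp a b c d) with p; try change (xA a b) with xa; try change (xB c d) with xb.
      * unfold uv_real. split; [nra|]. intros Hc1. exfalso. apply Hc1. split; auto.
      * lra.
      * auto.
      * auto.
      * lra.
      * auto.
      * lra.
      * lra.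
      * apply UD. nra.
      * apply VD. nra.
      * apply UD. nra.
      * apply VD. nra.
    + assert (HDw : 0 < (a*w+b)^2 + 4*(c*w+d)) by nra.
      assert (Hwm : w < m).
      { destruct (Rlt_le_dec w m); auto. rewrite Dfac in HDw.
        assert (0 <= (w - m) * (p - w)) by (apply Rmult_le_pos; lra). nra. }
      assert (Hgw : (1-a)*w^2 - (b+c)*w - d < 0) by (rewrite Hgm, HLw; lra).
      assert (HLm : 0 < 2*m - (a*m+b)) by nra.
      assert (Hgmm : 0 < (1-a)*m^2 - (b+c)*m - d) by (rewrite Hgm, HDm; nra).
      assert (HDg : 0 < Deltag a b c d).
      { assert (Deltag a b c d = Ff a b c d + DeltaD a b c d) by (unfold Deltag, Ff, DeltaD, xA; field; lra). nra. }
      assert (HVD := VD ltac:(nra)).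
      assert (HLx : forall x, w < x -> 0 < 2*x - (a*x+b)) by (intros; nra).
      assert (HDA : forall x, x < m -> 0 < (a*x+b)^2 + 4*(c*x+d) /\ a*x+b < 0)
        by (intros; split; [apply HDposL; lra | apply HAneg; lra]).
      destruct (Rlt_dec a 1) as [a1|a1]; cbn [fst snd].
      *
        assert (Hgf := fun x => gfactor a b c d x ltac:(lra) ltac:(lra)).
        pose proof (xg_le a b c d) as Hle.
        set (q1 := xgm a b c d) in *. set (q2 := xgp a b c d) in *.
        assert (H1 : q1 < w < q2).
        { rewrite Hgf in Hgw. apply (betw_pos (1-a)); auto; lra. }
        assert (Hq2m : q2 < m).
        { rewrite Hgf in Hgmm. destruct (out_pos (1-a) m q1 q2); auto; lra. }
        assert (Hq20 : q2 < 0).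
        { rewrite Hgf in Hg0. destruct (out_pos (1-a) 0 q1 q2); auto; lra. }
        destruct (U_G a b c d q2 w m ltac:(lra) Hq20) as [UP UL].
        { rewrite Hgf. ring. }
        { intros x Hx. apply HDA. lra. }
        { intros x Hx. rewrite Hgf. apply prod3_neg; lra. }
        { intros x Hx. split; [| apply HLx; lra]. rewrite Hgf. apply prod3_pos; lra. }
        destruct HVD as [VP VL].
        apply assemble.
        all: try change (xDm a b c d) with m; try change (xDp a b c d) with p; try change (xA a b) with xa; try change (xB c d) with xb.
        -- unfold uv_real. split; [nra|]. intros _. split; [intros; lra | intros; lra].
        -- lra.
        -- auto.
        -- auto.
        -- lra.
        -- auto.
        -- auto.
        -- lra.
        -- auto.
        -- auto.
        -- auto.
        -- auto.
      * destruct (Req_EM_T a 1) as [E1|E1].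
        --
          assert (Hbc : b + c < 0).
          { rewrite E1 in Hgw. assert (0 < (b+c)*w) by nra. nra. }
          set (q := -d/(b+c)).
          assert (Hq : xgm a b c d = q).
          { unfold xgm. destruct (Req_EM_T a 1); [reflexivity| contradiction]. }
          assert (Hgf1 : forall x, (1-a)*x^2 - (b+c)*x - d = -(b+c)*(x - q)).
          { intros x. rewrite E1. unfold q. field. lra. }
          assert (Hqq : q*(b+c) = -d) by (unfold q; field; lra).
          assert (Hq0 : q < 0) by nra.
          assert (Hwq : w < q) by (rewrite Hgf1 in Hgw; nra).
          assert (Hqm : q < m) by (rewrite Hgf1 in Hgmm; nra).
          rewrite Hq.
          destruct (U_G a b c d q w m ltac:(lra) Hq0) as [UP UL].
          { rewrite Hgf1. ring. }
          { intros x Hx. apply HDA. lra. }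
          { intros x Hx. rewrite Hgf1. nra. }
          { intros x Hx. split; [| apply HLx; lra]. rewrite Hgf1. nra. }
          destruct HVD as [VP VL].
          apply assemble.
          all: try change (xDm a b c d) with m; try change (xDp a b c d) with p; try change (xA a b) with xa; try change (xB c d) with xb.
          ++ unfold uv_real. split; [nra|]. intros _. split; [intros; contradiction | intros; lra].
          ++ lra.
          ++ auto.
          ++ auto.
          ++ lra.
          ++ auto.
          ++ auto.
          ++ lra.
          ++ auto.
          ++ auto.
          ++ auto.
          ++ auto.
        -- assert (a1' : 1 < a) by lra.
          assert (Hgf := fun x => gfactor a b c d x E1 ltac:(lra)).
          pose proof (xg_le a b c d) as Hle.
          set (q1 := xgm a b c d) in *. set (q2 := xgp a b c d) in *.
          assert (H1 : q1 < m < q2).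
          { rewrite Hgf in Hgmm. apply (betw_neg (1-a)); auto; lra. }
          assert (Hwq : w < q1).
          { rewrite Hgf in Hgw. destruct (out_neg (1-a) w q1 q2); auto; lra. }
          assert (Hq10 : q1 < 0 < q2).
          { rewrite Hgf in Hg0. apply (betw_neg (1-a)); auto; lra. }
          destruct (U_G a b c d q1 w m ltac:(lra) ltac:(lra)) as [UP UL].
          { rewrite Hgf. ring. }
          { intros x Hx. apply HDA. lra. }
          { intros x Hx. rewrite Hgf. apply prod3_nnn; lra. }
          { intros x Hx. split; [| apply HLx; lra]. rewrite Hgf. apply prod3_npn; lra. }
          destruct HVD as [VP VL].
          apply assemble.
          all: try change (xDm a b c d) with m; try change (xDp a b c d) with p; try change (xA a b) with xa; try change (xB c d) with xb.
          ++ unfold uv_real. split; [nra|]. intros _. split; [intros; lra | intros; lra].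
          ++ lra.
          ++ auto.
          ++ auto.
          ++ lra.
          ++ auto.
          ++ lra.
          ++ lra.
          ++ auto.
          ++ auto.
          ++ auto.
          ++ auto.
  - assert (a1 : 1 < a) by lra.
    assert (E1 : a <> 1) by lra.
    assert (Hgf := fun x => gfactor a b c d x E1 ltac:(unfold Deltag; nra)).
    assert (HDg : 0 < Deltag a b c d) by (unfold Deltag; nra).
    pose proof (xg_le a b c d) as Hle.
    set (q1 := xgm a b c d) in *. set (q2 := xgp a b c d) in *.
    assert (Haxa : a * xa = -b) by (rewrite HxA; field; lra).
    assert (HLm : 0 < 2*m - (a*m+b)).
    { assert (0 <= (a-2)*(xa - m)) by (apply Rmult_le_pos; lra). nra. }
    assert (Hgmm : 0 < (1-a)*m^2 - (b+c)*m - d) by (rewrite Hgm, HDm; nra).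
    assert (H1 : q1 < m < q2).
    { rewrite Hgf in Hgmm. apply (betw_neg (1-a)); auto; lra. }
    assert (Hq10 : q1 < 0 < q2).
    { rewrite Hgf in Hg0. apply (betw_neg (1-a)); auto; lra. }
    assert (HLx : forall x, x < m -> 0 < 2*x - (a*x+b)).
    { intros x Hx. assert (0 <= (a-2)*(m - x)) by (apply Rmult_le_pos; lra). nra. }
    assert (HDA : forall x, x < m -> 0 < (a*x+b)^2 + 4*(c*x+d) /\ a*x+b < 0)
      by (intros; split; [apply HDposL; lra | apply HAneg; lra]).
    destruct (U_G a b c d q1 (q1 - 1) m ltac:(lra) ltac:(lra)) as [UP UL].
    { rewrite Hgf. ring. }
    { intros x Hx. apply HDA. lra. }
    { intros x Hx. rewrite Hgf. apply prod3_nnn; lra. }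
    { intros x Hx. split; [| apply HLx; lra]. rewrite Hgf. apply prod3_npn; lra. }
    assert (HUR : uv_real a b c d).
    { unfold uv_real. split; [nra|]. intros _. split; [intros; lra | intros; lra]. }
    destruct (Rlt_dec 2 a) as [a2'|a2'].
    + set (w := b/(2-a)).
      assert (Hw : (2-a)*w = b) by (unfold w; field; lra).
      assert (Hw0 : 0 < w) by nra.
      assert (HFw : 4 * Ff a b c d = (2-a)^2 * ((a*w+b)^2 + 4*(c*w+d))) by (unfold w; apply F_id; lra).
      assert (HLw : 2*w - (a*w+b) = 0) by lra.
      assert (Hda : 0 < (2-a)^2) by nra.
      assert (Hwxa : xa < w) by nra.
      destruct (Rlt_dec (Ff a b c d) 0) as [F0|F0]; cbn [fst snd].
      *
        assert (HDw : (a*w+b)^2 + 4*(c*w+d) < 0) by nra.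
        assert (Hmwp : m < w < p).
        { rewrite Dfac in HDw. apply (betw_pos (a^2)); auto; lra. }
        assert (Hgw : 0 < (1-a)*w^2 - (b+c)*w - d) by (rewrite Hgm, HLw; nra).
        assert (Hq1w : q1 < w < q2).
        { rewrite Hgf in Hgw. apply (betw_neg (1-a)); auto; lra. }
        assert (HLp : 2*p - (a*p+b) < 0) by nra.
        assert (Hgp : 0 < (1-a)*p^2 - (b+c)*p - d) by (rewrite Hgm, HDp; nra).
        assert (Hq1p : q1 < p < q2).
        { rewrite Hgf in Hgp. apply (betw_neg (1-a)); auto; lra. }
        assert (Hxb0 : 0 < xb) by lra.
        assert (Hgxb : (1-a)*xb^2 - (b+c)*xb - d < 0).
        { assert (He : (a-2)*(d*(a-2) - b*c) < 0) by (unfold Ff in F0; nra).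
          assert (He2 : d*(a-2) - b*c < 0) by nra.
          assert (Hc1 : c*((1-a)*xb - b) < 0) by nra.
          assert (Hc2 : (1-a)*xb - b < 0) by nra.
          replace ((1-a)*xb^2 - (b+c)*xb - d) with (xb*((1-a)*xb - b) - (c*xb+d)) by ring.
          rewrite HBxB. nra. }
        assert (Hq2xb : q2 < xb).
        { rewrite Hgf in Hgxb. destruct (out_neg (1-a) xb q1 q2); auto; lra. }
        destruct (V_G a b c d q2 p (q2 + 1) ltac:(lra) ltac:(lra)) as [VP VL].
        { rewrite Hgf. ring. }
        { intros x Hx. split; [apply HDposR; lra | apply HApos; lra]. }
        { intros x Hx. split.
          - rewrite Hgf. apply prod3_npn; lra.
          - nra. }
        { intros x Hx. rewrite Hgf. apply prod3_npp; lra. }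
        apply assemble.
        all: try change (xDm a b c d) with m; try change (xDp a b c d) with p; try change (xA a b) with xa; try change (xB c d) with xb.
        all: auto; lra.
      * assert (HDw : 0 <= (a*w+b)^2 + 4*(c*w+d)) by nra.
        assert (Hpw : p <= w).
        { destruct (Rle_lt_dec p w); auto. rewrite Dfac in HDw.
          assert (0 < (w - m) * (p - w)) by (apply Rmult_lt_0_compat; lra). nra. }
        destruct (VD ltac:(nra)) as [VP VL].
        apply assemble.
        all: try change (xDm a b c d) with m; try change (xDp a b c d) with p; try change (xA a b) with xa; try change (xB c d) with xb.
        all: auto; lra.
    + cbn [fst snd].
      assert (E2 : a = 2) by lra.
      destruct (VD ltac:(rewrite E2; lra)) as [VP VL].
      apply assemble.
      all: try change (xDm a b c d) with m; try change (xDp a b c d) with p; try change (xA a b) with xa; try change (xB c d) with xb.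
      all: auto; lra.
Qed.
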